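(* Let $\mathbb{k}$ be a commutative ring, $M$ a $\mathbb{k}$-module with a descending filtration by $\mathbb{k}$-submodules $M=M_0\supseteq M_1\supseteq M_2\supseteq\cdots$, $G^{(1)}\subseteq GL^{(1)}_{\mathbb{k}}(M)$ a subgroup and $T\subseteq \mathrm{End}^{(1)}_{\mathbb{k}}(M)$ a $\mathbb{k}$-submodule. Let $i\ge 1$ and suppose that the pair $(T^{(i)},G^{(i)})$ is of pointwise Lie type, i.e.: (a) for every $\xi\in T^{(i)}$ and every $z\in M$ there exists $g\in G^{(i)}$ such that, if $\mathrm{ord}(\xi(z))<\infty$, then $\mathrm{ord}((g-\mathrm{Id}-\xi)(z))>\mathrm{ord}(\xi(z))$; (b) for every $g\in G^{(i)}$ and every $z\in M$ there exists $\xi\in T^{(i)}$ such that, if $\mathrm{ord}((g-\mathrm{Id})(z))<\infty$, then $\mathrm{ord}((g-\mathrm{Id}-\xi)(z))>\mathrm{ord}((g-\mathrm{Id})(z))$. Then for every $z\in M$ and every integer $N\ge0$: $$\overline{T^{(i)}(z)}\supseteq M_{N+1}\quad\Longleftrightarrow\quad \overline{G^{(i)}z}\supseteq \{z\}+M_{N+1}.$$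
   Context: For $z\in M$, $\mathrm{ord}(z)=\sup\{j: z\in M_j\}$ (equal to $\infty$ if $z\in\bigcap_j M_j$). For $i\ge0$, $\mathrm{End}^{(i)}_{\mathbb{k}}(M)=\{\phi\in \mathrm{End}_{\mathbb{k}}(M): \phi(M_j)\subseteq M_{j+i}\ \forall j\ge0\}$. $GL^{(0)}_{\mathbb{k}}(M)$ is the group of $\mathbb{k}$-linear automorphisms $g$ of $M$ with $g(M_j)\subseteq M_j$ and $g^{-1}(M_j)\subseteq M_j$ for all $j$; for $i\ge1$, $GL^{(i)}_{\mathbb{k}}(M)=\{g\in GL^{(0)}_{\mathbb{k}}(M): g-\mathrm{Id},\ g^{-1}-\mathrm{Id}\in \mathrm{End}^{(i)}_{\mathbb{k}}(M)\}$. For $i\ge1$ put $G^{(i)}=G^{(1)}\cap GL^{(i)}_{\mathbb{k}}(M)$ and $T^{(i)}=T\cap \mathrm{End}^{(i)}_{\mathbb{k}}(M)$. For $z\in M$, $T^{(i)}(z)=\{\xi(z):\xi\in T^{(i)}\}$ and $G^{(i)}z=\{g(z):g\in G^{(i)}\}$. For a subset $X\subseteq M$, its closure in the filtration topology is $\overline{X}=\bigcap_{j\ge1}(X+M_j)$. *)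

(* Defs.v *)
From HB Require Import structures.
From mathcomp Require Import all_boot all_order all_algebra.
Set Implicit Arguments. Unset Strict Implicit. Unset Printing Implicit Defensive.
Import GRing.Theory.
Local Open Scope ring_scope.

Section Filtered.
Variables (R : comPzRingType) (M : lmodType R).
Variable Mf : nat -> M -> Prop.

Definition is_submodule (S : M -> Prop) : Prop :=
  S 0 /\ forall (a : R) (x y : M), S x -> S y -> S (a *: x + y).

Definition is_filtration : Prop :=
  (forall x, Mf 0 x) /\ (forall j, is_submodule (Mf j)) /\
  (forall j x, Mf j.+1 x -> Mf j x).

Definition klinear (f : M -> M) : Prop :=
  forall (a : R) (x y : M), f (a *: x + y) = a *: f x + f y.

Definition End_i (i : nat) (f : M -> M) : Prop :=
  klinear f /\ forall j x, Mf j x -> Mf (j + i) (f x).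

Definition GL0_with_inv (g h : M -> M) : Prop :=
  klinear g /\ klinear h /\ cancel g h /\ cancel h g /\
  (forall j x, Mf j x -> Mf j (g x)) /\ (forall j x, Mf j x -> Mf j (h x)).

Definition GL0 (g : M -> M) : Prop := exists h, GL0_with_inv g h.

Definition GL_i (i : nat) (g : M -> M) : Prop :=
  exists h, GL0_with_inv g h /\
    End_i i (fun x => g x - x) /\ End_i i (fun x => h x - x).

Definition is_subgroup_GL1 (G : (M -> M) -> Prop) : Prop :=
  (forall g, G g -> GL_i 1 g) /\ G id /\
  (forall g h, G g -> G h -> G (g \o h)) /\
  (forall g, G g -> exists h, G h /\ cancel g h /\ cancel h g).

Definition is_submodule_End1 (T : (M -> M) -> Prop) : Prop :=
  (forall f, T f -> End_i 1 f) /\ T (fun _ => 0) /\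
  (forall (a : R) f g, T f -> T g -> T (fun x => a *: f x + g x)).

(* ord(z) = sup{j : z ∈ M_j}.
   ord_eq z n : "ord(z) = n" (finite), i.e. n is the supremum (= maximum,
   the set being a set of naturals) of {j | z ∈ M_j}.
   ord_gt z n : "ord(z) > n", i.e. the supremum exceeds n, i.e. some
   j > n has z ∈ M_j. *)
Definition ord_eq (z : M) (n : nat) : Prop :=
  Mf n z /\ forall j, Mf j z -> (j <= n)%N.
Definition ord_fin (z : M) : Prop := exists n, ord_eq z n.
Definition ord_gt (z : M) (n : nat) : Prop := exists j, (n < j)%N /\ Mf j z.

Definition Gi (G : (M -> M) -> Prop) (i : nat) (g : M -> M) : Prop :=
  G g /\ GL_i i g.
Definition Ti (T : (M -> M) -> Prop) (i : nat) (f : M -> M) : Prop :=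
  T f /\ End_i i f.

(* "ord(w) > ord(v)" under the hypothesis ord(v) < ∞ *)
Definition ord_improves (v w : M) : Prop :=
  forall n, ord_eq v n -> ord_gt w n.

Definition pointwise_Lie_type (T G : (M -> M) -> Prop) (i : nat) : Prop :=
  (forall xi z, Ti T i xi -> exists g, Gi G i g /\
      ord_improves (xi z) (g z - z - xi z)) /\
  (forall g z, Gi G i g -> exists xi, Ti T i xi /\
      ord_improves (g z - z) (g z - z - xi z)).

Definition Tz (T : (M -> M) -> Prop) (i : nat) (z : M) (y : M) : Prop :=
  exists xi, Ti T i xi /\ y = xi z.
Definition Gz (G : (M -> M) -> Prop) (i : nat) (z : M) (y : M) : Prop :=
  exists g, Gi G i g /\ y = g z.

(* closure in the filtration topology: ⋂_{j≥1} (X + M_j) *)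
Definition filt_closure (X : M -> Prop) (y : M) : Prop :=
  forall j, (1 <= j)%N -> exists x m, X x /\ Mf j m /\ y = x + m.

Definition psubset (A B : M -> Prop) : Prop := forall x, A x -> B x.

Definition translate (z : M) (A : M -> Prop) (y : M) : Prop :=
  exists m, A m /\ y = z + m.
End Filtered.

(* Main.v *)
Require Import Defs.
From mathcomp Require Import all_boot all_order all_algebra.
From Stdlib Require Import Classical.
Set Implicit Arguments. Unset Strict Implicit.
Import GRing.Theory.
Local Open Scope ring_scope.

Lemma f_mono (R : comPzRingType) (M : lmodType R) (Mf : nat -> M -> Prop) :
  is_filtration Mf -> forall a b x, (b <= a)%N -> Mf a x -> Mf b x.
Proof.
move=> [_ [_ Hd]] a b x; elim: a => [|a IH] ba Ha.
  by move: ba; rewrite leqn0 => /eqP ->.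
move: ba; rewrite leq_eqVlt => /orP [/eqP -> //|ba].
by apply: IH => //; apply: Hd.
Qed.

Lemma f_0 (R : comPzRingType) (M : lmodType R) (Mf : nat -> M -> Prop) :
  is_filtration Mf -> forall j, Mf j 0.
Proof. by move=> [_ [Hs _]] j; case: (Hs j). Qed.

Lemma f_D (R : comPzRingType) (M : lmodType R) (Mf : nat -> M -> Prop) :
  is_filtration Mf -> forall j x y, Mf j x -> Mf j y -> Mf j (x + y).
Proof.
move=> [_ [Hs _]] j x y Hx Hy; case: (Hs j) => _ H.
by have := H 1 x y Hx Hy; rewrite scale1r.
Qed.

Lemma f_N (R : comPzRingType) (M : lmodType R) (Mf : nat -> M -> Prop) :
  is_filtration Mf -> forall j x, Mf j x -> Mf j (- x).
Proof.
move=> Hf j x Hx; have [_ [Hs _]] := Hf; case: (Hs j) => H0 H.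
by have := H (-1) x 0 Hx H0; rewrite addr0 scaleN1r.
Qed.

Lemma f_B (R : comPzRingType) (M : lmodType R) (Mf : nat -> M -> Prop) :
  is_filtration Mf -> forall j x y, Mf j x -> Mf j y -> Mf j (x - y).
Proof. by move=> Hf j x y Hx Hy; apply: f_D => //; apply: f_N. Qed.

Lemma ord_cases (R : comPzRingType) (M : lmodType R) (Mf : nat -> M -> Prop) :
  is_filtration Mf -> forall w, (forall j, Mf j w) \/ exists n, ord_eq Mf w n.
Proof.
move=> Hf w; case: (classic (exists n, ord_eq Mf w n)) => [|H]; [by right|left].
have [H0 _] := Hf.
elim=> [//|j IH]; apply: NNPP => Hn; apply: H; exists j; split=> // k Hk.
rewrite leqNgt; apply/negP => jk; apply: Hn; exact: (f_mono Hf jk Hk).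
Qed.

Lemma klinD (R : comPzRingType) (M : lmodType R) (f : M -> M) :
  klinear f -> forall x y, f (x + y) = f x + f y.
Proof. by move=> Hf x y; have := Hf 1 x y; rewrite !scale1r. Qed.

Lemma klin_comp (R : comPzRingType) (M : lmodType R) (f g : M -> M) :
  klinear f -> klinear g -> klinear (f \o g).
Proof. by move=> Hf Hg a x y /=; rewrite Hg Hf. Qed.

Lemma klin_comb (R : comPzRingType) (M : lmodType R) (f g : M -> M) c :
  klinear f -> klinear g -> klinear (fun x => c *: f x + g x).
Proof.
move=> Hf Hg a x y /=; rewrite Hf Hg !scalerDr !scalerA (mulrC c a).
by rewrite addrACA.
Qed.

Lemma zid1 (M : zmodType) (a b c : M) : a - c = (a - b) + (b - c).
Proof. by rewrite addrA subrK. Qed.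

Lemma End_comp (R : comPzRingType) (M : lmodType R) (Mf : nat -> M -> Prop) i g h :
  is_filtration Mf ->
  End_i Mf i (fun x => g x - x) -> End_i Mf i (fun x => h x - x) ->
  klinear g -> klinear h -> (forall j x, Mf j x -> Mf j (h x)) ->
  End_i Mf i (fun x => g (h x) - x).
Proof.
move=> Hf [_ Eg] [_ Eh] Lg Lh Ph; split.
  move=> a x y /=; rewrite Lh Lg scalerBr opprD.
  by rewrite addrACA.
move=> j x Hx; rewrite (zid1 _ (h x)); apply: f_D => //.
  by apply: Eg; apply: Ph.
exact: Eh.
Qed.

Lemma GL_comp (R : comPzRingType) (M : lmodType R) (Mf : nat -> M -> Prop) i g h :
  is_filtration Mf -> GL_i Mf i g -> GL_i Mf i h -> GL_i Mf i (g \o h).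
Proof.
move=> Hf [g' [[Lg [Lg' [c1 [c2 [P1 P2]]]]] [E1 E2]]]
          [h' [[Lh [Lh' [d1 [d2 [Q1 Q2]]]]] [F1 F2]]].
exists (h' \o g'); split; [split; [|split; [|split; [|split; [|split]]]]|split].
- exact: klin_comp.
- exact: klin_comp.
- exact: can_comp.
- exact: can_comp.
- by move=> j x Hx /=; apply: P1; apply: Q1.
- by move=> j x Hx /=; apply: Q2; apply: P2.
- exact: (End_comp Hf E1 F1 Lg Lh Q1).
- exact: (End_comp Hf F2 E2 Lh' Lg' P2).
Qed.

Lemma Gi_id (R : comPzRingType) (M : lmodType R) (Mf : nat -> M -> Prop) G i :
  is_filtration Mf -> is_subgroup_GL1 Mf G -> Gi Mf G i id.
Proof.
move=> Hf [_ [HG _]]; split=> //.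
have E : End_i Mf i (fun x : M => id x - x).
  split; first by move=> a x y /=; rewrite !subrr scaler0 addr0.
  by move=> j x _ /=; rewrite subrr; apply: f_0.
by exists id; split; [split; [|split; [|split; [|split; [|split]]]]|split].
Qed.

Lemma Gi_End (R : comPzRingType) (M : lmodType R) (Mf : nat -> M -> Prop) G i g :
  Gi Mf G i g -> End_i Mf i (fun x => g x - x) /\ klinear g.
Proof. by move=> [_ [h [[Lg _] [E _]]]]. Qed.

Lemma ord_of_approx (R : comPzRingType) (M : lmodType R) (Mf : nat -> M -> Prop) w n x mm :
  is_filtration Mf -> ord_eq Mf w n -> Mf n.+1 mm -> w = x + mm -> ord_eq Mf x n.
Proof.
move=> Hf [Hn Hmax] Hmm Hw.
have Ex : x = w - mm by rewrite Hw addrK.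
split.
  rewrite Ex; apply: f_B => //; apply: (f_mono Hf _ Hmm); exact: leqnSn.
move=> j Hj; rewrite leqNgt; apply/negP => nj.
have : Mf n.+1 w by rewrite Hw; apply: f_D => //; exact: (f_mono Hf nj Hj).
by move/Hmax; rewrite ltnn.
Qed.

Lemma stepG (R : comPzRingType) (M : lmodType R) (Mf : nat -> M -> Prop)
  (G : (M -> M) -> Prop) (T : (M -> M) -> Prop) (i : nat) z N :
  is_filtration Mf -> is_subgroup_GL1 Mf G ->
  pointwise_Lie_type Mf T G i ->
  psubset (Mf N.+1) (filt_closure Mf (Tz Mf T i z)) ->
  forall w p, (N < p)%N -> Mf p w -> exists h, Gi Mf G i h /\ Mf p.+1 (h z - z - w).
Proof.
move=> Hf HG [Ha _] HT w p Np Hw.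
case: (ord_cases Hf w) => [Hall|[n Hn]].
  exists id; split; first exact: Gi_id.
  by rewrite /= subrr sub0r; apply: f_N.
have pn : (p <= n)%N by apply: Hn.2.
have wN : Mf N.+1 w by apply: (f_mono Hf Np Hw).
have [x [mm [[xi [Txi ->]] [Hmm Hw']]]] := HT w wN n.+1 isT.
have ox := ord_of_approx Hf Hn Hmm Hw'.
have [g [Gg Himp]] := Ha xi z Txi.
have [j [nj Hj]] := Himp n ox.
exists g; split=> //.
have -> : g z - z - w = (g z - z - xi z) - mm by rewrite Hw' opprD addrA.
apply: (@f_mono _ _ _ Hf n.+1 p.+1 _ pn); apply: f_B => //; exact: (f_mono Hf nj Hj).
Qed.

Lemma stepT (R : comPzRingType) (M : lmodType R) (Mf : nat -> M -> Prop)
  (G : (M -> M) -> Prop) (T : (M -> M) -> Prop) (i : nat) z N :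
  is_filtration Mf -> is_submodule_End1 Mf T ->
  pointwise_Lie_type Mf T G i ->
  psubset (translate z (Mf N.+1)) (filt_closure Mf (Gz Mf G i z)) ->
  forall w p, (N < p)%N -> Mf p w -> exists xi, Ti Mf T i xi /\ Mf p.+1 (xi z - w).
Proof.
move=> Hf [_ [HT0 _]] [_ Hb] HG w p Np Hw.
case: (ord_cases Hf w) => [Hall|[n Hn]].
  exists (fun _ => 0); split.
    split=> //; split; first by move=> a x y; rewrite scaler0 addr0.
    by move=> *; apply: f_0.
  by rewrite sub0r; apply: f_N.
have pn : (p <= n)%N by apply: Hn.2.
have wN : Mf N.+1 w by apply: (f_mono Hf Np Hw).
have [x [mm [[g [Gg ->]] [Hmm Hw']]]] := HG (z + w) (ex_intro _ w (conj wN erefl)) n.+1 isT.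
have Hw2 : w = (g z - z) + mm by rewrite addrAC -Hw' addrAC subrr add0r.
have ox := ord_of_approx Hf Hn Hmm Hw2.
have [xi [Txi Himp]] := Hb g z Gg.
have [j [nj Hj]] := Himp n ox.
exists xi; split=> //.
have -> : xi z - w = - (g z - z - xi z) - mm.
  by rewrite Hw2 opprD addrA [- (g z - z - xi z)]opprB.
apply: (@f_mono _ _ _ Hf n.+1 p.+1 _ pn); apply: f_B => //; apply: f_N => //; exact: (f_mono Hf nj Hj).
Qed.

Lemma zid3 (M : zmodType) (gd gz d z m : M) :
  gd + gz - z - m = (d - - (gz - z - m)) + (gd - d).
Proof. by rewrite opprK [RHS]addrC [RHS]addrA subrK !addrA. Qed.

Lemma iterG (R : comPzRingType) (M : lmodType R) (Mf : nat -> M -> Prop)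
  (G : (M -> M) -> Prop) (T : (M -> M) -> Prop) (i : nat) z N :
  is_filtration Mf -> is_subgroup_GL1 Mf G -> (1 <= i)%N ->
  pointwise_Lie_type Mf T G i ->
  psubset (Mf N.+1) (filt_closure Mf (Tz Mf T i z)) ->
  forall k m, Mf N.+1 m -> exists g, Gi Mf G i g /\ Mf (N.+1 + k)%N (g z - z - m).
Proof.
move=> Hf HG Hi Hl HT; elim=> [|k IH] m Hm.
  exists id; split; first exact: Gi_id.
  by rewrite addn0 /= subrr sub0r; apply: f_N.
have [g [Gg He]] := IH m Hm.
have [h [Gh Hh]] := stepG Hf HG Hl HT (leq_addr k N.+1 : (N < N.+1 + k)%N) (f_N Hf He).
exists (g \o h); split.
  split; first by apply: HG.2.2.1; [exact: Gg.1|exact: Gh.1].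
  exact: GL_comp Hf Gg.2 Gh.2.
have [[_ Eg] Lg] := Gi_End Gg.
rewrite /=.
have -> : h z = (h z - z) + z by rewrite subrK.
rewrite (klinD Lg) (zid3 _ _ (h z - z)) addnS.
apply: f_D => //.
have Hd : Mf (N.+1 + k)%N (h z - z).
  have -> : h z - z = (h z - z - - (g z - z - m)) + - (g z - z - m) by rewrite subrK.
  apply: f_D => //.
    by apply: (f_mono Hf (leqnSn _) Hh).
  exact: f_N.
apply: (f_mono Hf _ (Eg _ _ Hd)); by rewrite -addn1 leq_add2l.
Qed.

Lemma iterT (R : comPzRingType) (M : lmodType R) (Mf : nat -> M -> Prop)
  (G : (M -> M) -> Prop) (T : (M -> M) -> Prop) (i : nat) z N :
  is_filtration Mf -> is_submodule_End1 Mf T ->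
  pointwise_Lie_type Mf T G i ->
  psubset (translate z (Mf N.+1)) (filt_closure Mf (Gz Mf G i z)) ->
  forall k m, Mf N.+1 m -> exists xi, Ti Mf T i xi /\ Mf (N.+1 + k)%N (xi z - m).
Proof.
move=> Hf HT Hl HG; elim=> [|k IH] m Hm.
  exists (fun _ => 0); split.
    split; first exact: HT.2.1.
    split; first by move=> a x y; rewrite scaler0 addr0.
    by move=> *; apply: f_0.
  by rewrite addn0 sub0r; apply: f_N.
have [xi [Txi He]] := IH m Hm.
have He' : Mf (N.+1 + k)%N (m - xi z) by rewrite -opprB; apply: f_N.
have [xi' [Txi' Hh]] := stepT Hf HT Hl HG (leq_addr k N.+1 : (N < N.+1 + k)%N) He'.
exists (fun x => 1 *: xi' x + xi x); split.
  split; first by apply: HT.2.2; [exact: Txi'.1|exact: Txi.1].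
  split; first by apply: klin_comb; [exact: Txi'.2.1|exact: Txi.2.1].
  move=> j x Hx; have [_ [Hs _]] := Hf; apply: (Hs _).2.
    exact: Txi'.2.2.
  exact: Txi.2.2.
have -> : 1 *: xi' z + xi z - m = xi' z - (m - xi z) by rewrite scale1r opprB addrA.
by rewrite addnS.
Qed.

Theorem theorem4p1 (R : comPzRingType) (M : lmodType R) (Mf : nat -> M -> Prop)
  (G : (M -> M) -> Prop) (T : (M -> M) -> Prop) (i : nat) :
  is_filtration Mf ->
  is_subgroup_GL1 Mf G ->
  is_submodule_End1 Mf T ->
  (1 <= i)%N ->
  pointwise_Lie_type Mf T G i ->
  forall (z : M) (N : nat),
    psubset (Mf N.+1) (filt_closure Mf (Tz Mf T i z)) <->
    psubset (translate z (Mf N.+1)) (filt_closure Mf (Gz Mf G i z)).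
Proof.
move=> Hf HG HT Hi Hl z N; split.
  move=> HTc y [m [Hm ->]] j j1.
  have [g [Gg Hg]] := iterG Hf HG Hi Hl HTc j Hm.
  exists (g z), (- (g z - z - m)); split; first by exists g.
  split; first by apply: f_N => //; apply: (f_mono Hf _ Hg); rewrite addnC leq_addr.
  by rewrite !opprD !opprK !addrA subrr add0r.
move=> HGc m Hm j j1.
have [xi [Txi Hx]] := iterT Hf HT Hl HGc j Hm.
exists (xi z), (- (xi z - m)); split; first by exists xi.
split; first by apply: f_N => //; apply: (f_mono Hf _ Hx); rewrite addnC leq_addr.
by rewrite opprB addrC subrK.
Qed.
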